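(* (a) Suppose $d>c>0$ and $a,b,\delta>0$. Then the function \[ x\mapsto {}_2F_1(a,b;c+\delta;x)\,{}_2F_1(a,b;d;x)-{}_2F_1(a,b;d+\delta;x)\,{}_2F_1(a,b;c;x) \] has negative power series coefficients, starting with the coefficient at $x$. (b) The function $c\mapsto{}_2F_1(a,b;c;x)$ is log-convex on $(0,\infty)$ if $a,b>0$, $0<x<1$; or $a<0$, $x<0$, $b>0$; or $b<0$, $x<0$, $a>0$. (c) The function $\mu\mapsto{}_2F_1(a,b+\mu;c+\mu;x)$ is log-convex on $[0,\infty)$ if $a>0$, $b>c>0$, $0<x<1$; or $a<0$, $b<c$, $c>0$, $0<x<1$; or $a>0$, $b<c$, $c>0$, $x<0$. (d) The function $\mu\mapsto{}_2F_1(a+\mu,b+\mu;c+\mu;x)$ is log-convex on $[0,\infty)$ if $a<c$, $b\ge c>0$, $x<0$; or $a<c$, $b<c$, $c>0$, $0<x<1$.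
   Context: $(a)_k=a(a+1)\cdots(a+k-1)$ is the Pochhammer symbol; ${}_2F_1(a,b;c;x)=\sum_{k\ge0}\frac{(a)_k(b)_k}{(c)_k k!}x^k$ (for $x<0$ understood via analytic continuation). *)

(* Defs.v *)
From Stdlib Require Import Reals.
From Coquelicot Require Import Coquelicot.
Open Scope R_scope.

Fixpoint poch (a : R) (k : nat) : R :=
  match k with
  | O => 1
  | S k' => poch a k' * (a + INR k')
  end.

Definition hypcoef (a b c : R) (k : nat) : R :=
  poch a k * poch b k / (poch c k * INR (Factorial.fact k)).

Definition hypseries (a b c x : R) : R :=
  Series (fun k => hypcoef a b c k * x ^ k).

(* 2F1(a,b;c;x) for x < 1: the series for |x| < 1; for x <= -1 the analytic
   continuation, given explicitly by Pfaff's transformation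
   2F1(a,b;c;x) = (1-x)^(-a) 2F1(a,c-b;c;x/(x-1)), where x/(x-1) is in [1/2,1).
   (Values for x >= 1 are irrelevant junk, 0.) *)
Definition hyp2F1 (a b c x : R) : R :=
  if Rlt_dec (Rabs x) 1 then hypseries a b c x
  else if Rlt_dec x 0 then Rpower (1 - x) (- a) * hypseries a (c - b) c (x / (x - 1))
  else 0.

Definition log_convex_on (P : R -> Prop) (f : R -> R) : Prop :=
  (forall s, P s -> 0 < f s) /\
  (forall s1 s2 t, P s1 -> P s2 -> 0 <= t <= 1 ->
     ln (f (t * s1 + (1 - t) * s2)) <= t * ln (f s1) + (1 - t) * ln (f s2)).

(* Main.v *)
Require Import Defs.
From Stdlib Require Import Reals Lra Lia Psatz.
From Coquelicot Require Import Coquelicot.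
Open Scope R_scope.


Lemma poch_pos a k : 0 < a -> 0 < poch a k.
Proof. intros Ha; induction k; simpl; [lra|]. apply Rmult_lt_0_compat; auto. pose proof (pos_INR k); lra. Qed.

Lemma poch_shift a k : poch a (S k) = a * poch (a+1) k.
Proof. induction k. simpl; ring. change (poch a (S (S k))) with (poch a (S k) * (a + INR (S k))).
  rewrite IHk. simpl poch. rewrite S_INR. ring. Qed.

Lemma poch_abs a k : Rabs (poch a k) <= poch (Rabs a + 1) k.
Proof. induction k; simpl. rewrite Rabs_R1; lra.
  rewrite Rabs_mult. apply Rmult_le_compat; try apply Rabs_pos; auto.
  pose proof (Rabs_triang a (INR k)). rewrite (Rabs_right (INR k)) in H by (apply Rle_ge, pos_INR). lra. Qed.

Lemma poch_nz a k : 0 < a -> poch a k <> 0.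
Proof. intros; apply Rgt_not_eq, poch_pos; auto. Qed.

Lemma fact_pos k : 0 < INR (Factorial.fact k).
Proof. apply lt_0_INR, Factorial.lt_O_fact. Qed.

Ltac pos := unfold Rgt in *; repeat (first [ assumption | match goal with
  | |- 0 < poch _ _ => apply poch_pos
  | |- 0 < INR (Factorial.fact _) => apply fact_pos
  | |- 0 < _ * _ => apply Rmult_lt_0_compat
  | |- 0 < / _ => apply Rinv_0_lt_compat
  | |- 0 < _ / _ => apply Rdiv_lt_0_compat
  | |- 0 < _ ^ _ => apply pow_lt
  end]); try lra.

Lemma hypcoef_S a b c n : 0 < c ->
  hypcoef a b c (S n) = hypcoef a b c n * ((a + INR n) * (b + INR n) / ((c + INR n) * (INR n + 1))).
Proof. intros Hc. unfold hypcoef. simpl poch. rewrite fact_simpl, mult_INR, S_INR.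
  assert (0 < poch c n) by (apply poch_pos; auto). pose proof (fact_pos n). pose proof (pos_INR n).
  field. repeat split; lra. Qed.

Lemma hypcoef_pos a b c n : 0 < a -> 0 < b -> 0 < c -> 0 < hypcoef a b c n.
Proof. intros; unfold hypcoef. apply Rdiv_lt_0_compat. apply Rmult_lt_0_compat; apply poch_pos; auto.
  apply Rmult_lt_0_compat; [apply poch_pos; auto| apply fact_pos]. Qed.

Lemma hypcoef_abs a b c n : 0 < c -> Rabs (hypcoef a b c n) <= hypcoef (Rabs a + 1) (Rabs b + 1) c n.
Proof. intros Hc; unfold hypcoef. assert (0 < poch c n) by (apply poch_pos; auto). pose proof (fact_pos n).
  unfold Rdiv. rewrite Rabs_mult, Rabs_mult, Rabs_inv, (Rabs_right (poch c n * _)) by nra.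
  apply Rmult_le_compat_r. left; apply Rinv_0_lt_compat; nra.
  apply Rmult_le_compat; try apply Rabs_pos; apply poch_abs. Qed.

Lemma lim_ratio A C : 0 < C -> is_lim_seq (fun n => (A + INR n) / (C + INR n)) 1.
Proof. intros HC.
  assert (H1 : is_lim_seq (fun n => C + INR n) p_infty).
  { eapply is_lim_seq_plus. apply is_lim_seq_const. apply is_lim_seq_INR. simpl. reflexivity. }
  assert (H2 := is_lim_seq_inv _ _ H1 ltac:(discriminate)). simpl in H2.
  assert (H3 := is_lim_seq_scal_l _ (A - C) _ H2). simpl in H3.
  assert (H4 := is_lim_seq_plus' _ _ 1 _ (is_lim_seq_const 1) H3).
  replace (1 + (A - C) * 0) with 1 in H4 by ring.
  eapply is_lim_seq_ext; [|exact H4]. intros n; simpl. pose proof (pos_INR n). field. lra. Qed.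

Lemma hyp_abs_conv a b c r : 0 < c -> 0 < r < 1 -> ex_series (fun n => Rabs (hypcoef a b c n * r ^ n)).
Proof. intros Hc Hr. set (A := Rabs a + 1). set (B := Rabs b + 1).
  assert (HA : 0 < A) by (unfold A; pose proof (Rabs_pos a); lra).
  assert (HB : 0 < B) by (unfold B; pose proof (Rabs_pos b); lra).
  apply (@ex_series_le R_AbsRing R_CompleteNormedModule) with (b := fun n => Rabs (hypcoef A B c n * r ^ n)).
  { intros n. change norm with Rabs. rewrite Rabs_Rabsolu, !Rabs_mult.
    apply Rmult_le_compat_r. apply Rabs_pos. rewrite (Rabs_right (hypcoef A B c n)).
    apply hypcoef_abs; auto. left; apply hypcoef_pos; auto. }
  apply ex_series_DAlembert with (k := r). lra.
  { intros n. apply Rmult_integral_contrapositive; split.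
    apply Rgt_not_eq, hypcoef_pos; auto. apply pow_nonzero; lra. }
  eapply is_lim_seq_ext with (u := fun n => ((A + INR n)/(c + INR n)) * ((B + INR n)/(1 + INR n)) * r).
  { intros n. rewrite hypcoef_S by auto. simpl pow.
    assert (0 < hypcoef A B c n) by (apply hypcoef_pos; auto). pose proof (pos_INR n).
    assert (0 < r ^ n) by (apply pow_lt; lra).
    rewrite Rabs_right. field. repeat split; try lra. apply Rle_ge, Rlt_le.
    pos. }
  replace (Finite r) with (Finite (1 * 1 * r)) by (f_equal; ring).
  apply is_lim_seq_mult'.  apply is_lim_seq_mult'; apply lim_ratio; lra. apply is_lim_seq_const.
Qed.

Lemma Series_nonneg u : (forall k, 0 <= u k) -> ex_series u -> 0 <= Series u.
Proof. intros Hu He. replace 0 with (Series (fun n => 0 * u n)).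
  apply Series_le; auto. intros n; split; [lra| specialize (Hu n); lra].
  rewrite Series_scal_l. ring. Qed.

Lemma sum_le_series u n : (forall k, 0 <= u k) -> ex_series u -> sum_f_R0 u n <= Series u.
Proof. intros Hu He. rewrite (Series_incr_n u (S n)) by (lia || auto). simpl Init.Nat.pred.
  assert (0 <= Series (fun k => u (S n + k)%nat)).
  { apply Series_nonneg. auto. apply (ex_series_incr_n u (S n)); auto. }
  lra. Qed.

Lemma term_le_sum u n : (forall k, 0 <= u k) -> u n <= sum_f_R0 u n.
Proof. intros Hu. destruct n. simpl; lra. rewrite tech5. pose proof (cond_pos_sum u n Hu). lra. Qed.

Lemma term_le_series u n : (forall k, 0 <= u k) -> ex_series u -> u n <= Series u.
Proof. intros. eapply Rle_trans. apply term_le_sum; auto. apply sum_le_series; auto. Qed.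

Lemma radius_ge_1 a : (forall r, 0 < r < 1 -> ex_series (fun n => Rabs (a n * r ^ n))) ->
  Rbar_le 1 (CV_radius a).
Proof. intros H. destruct (CV_radius_bounded a) as [Hub _].
  assert (Hr : forall r, 0 < r < 1 -> Rbar_le r (CV_radius a)).
  { intros r Hr0. apply Hub. exists (Series (fun n => Rabs (a n * r ^ n))). intros n.
    apply (term_le_series (fun n => Rabs (a n * r ^ n))). intros; apply Rabs_pos. auto. }
  pose proof (CV_radius_ge_0 a) as H0.
  destruct (CV_radius a) as [l| |]; simpl in *; auto.
  destruct (Rle_lt_dec 1 l); auto. exfalso.
  assert (Hl : 0 < (l+1)/2 < 1) by lra. specialize (Hr _ Hl). simpl in Hr. lra. Qed.

Lemma hyp_radius a b c : 0 < c -> Rbar_le 1 (CV_radius (hypcoef a b c)).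
Proof. intros; apply radius_ge_1; intros; apply hyp_abs_conv; auto. Qed.

Lemma lt_radius a x : Rbar_le 1 (CV_radius a) -> Rabs x < 1 -> Rbar_lt (Rabs x) (CV_radius a).
Proof. intros H Hx. destruct (CV_radius a); simpl in *; auto; lra. Qed.

Lemma hyp_is_series a b c x : 0 < c -> Rabs x < 1 ->
  is_series (fun n => hypcoef a b c n * x ^ n) (hypseries a b c x).
Proof. intros. unfold hypseries. apply Series_correct.
  apply ex_series_Rabs. apply CV_disk_inside. apply lt_radius; auto. apply hyp_radius; auto. Qed.

Lemma binom_derive_coef s n : PS_derive (hypcoef s 1 1) n = (s + INR n) * hypcoef s 1 1 n.
Proof. unfold PS_derive. rewrite hypcoef_S by lra. rewrite S_INR. pose proof (pos_INR n). field. lra. Qed.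

Lemma binom_ode s x : Rabs x < 1 ->
  (1 - x) * PSeries (PS_derive (hypcoef s 1 1)) x = s * PSeries (hypcoef s 1 1) x.
Proof. intros Hx. set (h := hypcoef s 1 1). set (D := PS_derive h).
  assert (HR : Rbar_lt (Rabs x) (CV_radius h)) by (apply lt_radius; auto; apply hyp_radius; lra).
  assert (ED : ex_pseries D x) by (apply ex_pseries_derive; auto).
  assert (EI : ex_pseries (PS_incr_1 D) x) by (apply ex_pseries_incr_1; auto).
  rewrite Rmult_minus_distr_r, Rmult_1_l, <- PSeries_incr_1, <- PSeries_minus by auto.
  rewrite <- PSeries_scal. apply PSeries_ext. intros n. unfold PS_minus, PS_scal, D.
  change plus with Rplus; change opp with Ropp; change scal with Rmult.
  unfold h; rewrite binom_derive_coef. destruct n as [|m].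
  - simpl. change zero with 0. ring.
  - simpl PS_incr_1. rewrite binom_derive_coef.
    pose proof (hypcoef_S s 1 1 m ltac:(lra)) as E. rewrite E. rewrite S_INR. pose proof (pos_INR m). field. lra.
Qed.

Lemma PSeries_Series a x : PSeries a x = Series (fun k => a k * x ^ k).
Proof. reflexivity. Qed.

Lemma hyp_PSeries a b c x : hypseries a b c x = PSeries (hypcoef a b c) x.
Proof. rewrite PSeries_Series. reflexivity. Qed.

Lemma binom_series s x : Rabs x < 1 -> is_series (fun n => hypcoef s 1 1 n * x ^ n) (Rpower (1 - x) (- s)).
Proof. intros Hx. set (h := hypcoef s 1 1).
  assert (HR : forall y, Rabs y < 1 -> Rbar_lt (Rabs y) (CV_radius h)) by (intros; apply lt_radius; auto; apply hyp_radius; lra).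
  set (g := fun y => PSeries h y * exp (s * ln (1 - y))).
  assert (Hg : forall y, -1 < y < 1 -> is_derive g y 0).
  { intros y Hy. assert (Hy' : Rabs y < 1) by (apply Rabs_def1; lra).
    unfold g. eapply is_derive_ext; [intros; reflexivity|].
    assert (H1 : is_derive (fun y => exp (s * ln (1 - y))) y (exp (s * ln (1 - y)) * (s * (-1 / (1 - y))))).
    { auto_derive. lra. unfold Rminus. field. lra. }
    pose proof (is_derive_mult _ _ _ _ _ (is_derive_PSeries h y (HR y Hy')) H1 ltac:(intros; apply Rmult_comm)) as H2.
    replace (0:R) with
      (plus (mult (PSeries (PS_derive h) y) (exp (s * ln (1 - y))))
            (mult (PSeries h y) (exp (s * ln (1 - y)) * (s * (-1 / (1 - y)))))). exact H2.
    symmetry.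
    change plus with Rplus; change mult with Rmult. simpl.
    pose proof (binom_ode s y Hy'). fold h in H.
    assert (1 - y <> 0) by lra.
    apply Rmult_eq_reg_l with (1 - y); auto. rewrite Rmult_0_r. 
    replace ((1 - y) * (PSeries (PS_derive h) y * exp (s * ln (1 - y)) +
       PSeries h y * (exp (s * ln (1 - y)) * (s * (-1 / (1 - y))))))
      with (exp (s * ln (1 - y)) * ((1 - y) * PSeries (PS_derive h) y - s * PSeries h y)) by (field; auto).
    rewrite H. ring. }
  assert (Hgx : g x = g 0).
  { destruct (Rtotal_order x 0) as [Hl|[He|Hg']].
    - apply eq_is_derive. intros t Ht. apply Hg. pose proof (Rabs_def2 _ _ Hx). lra. lra.
    - subst; auto.
    - symmetry. apply eq_is_derive. intros t Ht. apply Hg. pose proof (Rabs_def2 _ _ Hx). lra. lra. }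
  unfold g in Hgx. rewrite PSeries_0, Rminus_0_r, ln_1, Rmult_0_r, exp_0, Rmult_1_r in Hgx.
  assert (Hh0 : h 0%nat = 1) by (unfold h, hypcoef; simpl; field).
  rewrite Hh0 in Hgx.
  assert (HS : PSeries h x = Rpower (1 - x) (- s)).
  { unfold Rpower. pose proof (exp_pos (s * ln (1 - x))).
    replace (- s * ln (1 - x)) with (- (s * ln (1 - x))) by ring. rewrite exp_Ropp.
    apply Rmult_eq_reg_r with (exp (s * ln (1 - x))). rewrite Hgx. field. lra. lra. }
  rewrite <- HS, PSeries_Series. apply Series_correct.
  apply ex_series_Rabs. apply CV_disk_inside. apply HR; auto.
Qed.

Fixpoint bin (n k : nat) : R :=
  match n, k with
  | _, O => 1
  | O, S _ => 0
  | S n', S k' => bin n' k' + bin n' (S k')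
  end.

Lemma bin_0 n : bin n 0 = 1.
Proof. destruct n; reflexivity. Qed.

Lemma bin_gt n k : (n < k)%nat -> bin n k = 0.
Proof. revert k; induction n; intros k Hk; destruct k; try lia; simpl; auto.
  rewrite !IHn by lia. ring. Qed.

Lemma bin_fact n k : (k <= n)%nat -> bin n k * INR (Factorial.fact k) * INR (Factorial.fact (n - k)) = INR (Factorial.fact n).
Proof. revert k; induction n; intros k Hk.
  - destruct k; [|lia]. simpl. ring.
  - destruct k as [|k].
    + simpl bin. rewrite Nat.sub_0_r. simpl (Factorial.fact 0). simpl INR at 1. ring.
    + simpl bin. destruct (Nat.eq_dec k n) as [->|Hne].
      * rewrite (bin_gt n (S n)) by lia. rewrite Nat.sub_diag. specialize (IHn n (le_n n)). rewrite Nat.sub_diag in IHn.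
        simpl (Factorial.fact 0) in *. rewrite INR_1, Rmult_1_r in IHn.
        assert (bin n n = 1). { pose proof (fact_pos n). apply Rmult_eq_reg_r with (INR (Factorial.fact n)); lra. }
        rewrite H, INR_1. ring.
      * assert (Hk' : (k < n)%nat) by lia.
        pose proof (IHn k ltac:(lia)) as H1. pose proof (IHn (S k) Hk') as H2.
        set (m := (n - S k)%nat) in *.
        assert (Em : (n - k)%nat = S m) by (unfold m; lia).
        assert (En : n = (k + 1 + m)%nat) by (unfold m; lia).
        replace (S n - S k)%nat with (S m) by lia. rewrite Em in H1.
        assert (F1 : INR (Factorial.fact (S m)) = (INR m + 1) * INR (Factorial.fact m)) by (rewrite fact_simpl, mult_INR, S_INR; ring).
        assert (F2 : INR (Factorial.fact (S k)) = (INR k + 1) * INR (Factorial.fact k)) by (rewrite fact_simpl, mult_INR, S_INR; ring).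
        assert (F3 : INR (Factorial.fact (S n)) = (INR n + 1) * INR (Factorial.fact n)) by (rewrite fact_simpl, mult_INR, S_INR; ring).
        assert (F4 : INR n = INR k + 1 + INR m) by (rewrite En, !plus_INR; simpl; ring).
        rewrite F1 in H1 |- *. rewrite F2 in H2 |- *. rewrite F3, F4.
        set (F := INR (Factorial.fact n)) in *. set (A := INR (Factorial.fact k)) in *. set (B := INR (Factorial.fact m)) in *.
        replace ((bin n k + bin n (S k)) * ((INR k + 1) * A) * ((INR m + 1) * B)) with
          ((INR k + 1) * (bin n k * A * ((INR m + 1) * B)) + (INR m + 1) * (bin n (S k) * ((INR k + 1) * A) * B)) by ring.
        rewrite H1, H2. ring.
Qed.

Lemma sum_scal_l (A : nat -> R) x n : sum_f_R0 (fun i => x * A i) n = x * sum_f_R0 A n.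
Proof. rewrite scal_sum. apply sum_eq. intros; ring. Qed.

Definition CVsum (n : nat) (g c : R) : R := sum_f_R0 (fun k => bin n k * (-1) ^ k * poch g k / poch c k) n.

Lemma CV_step n g c : 0 < c -> CVsum (S n) g c = CVsum n g c - g / c * CVsum n (g + 1) (c + 1).
Proof. intros Hc. unfold CVsum.
  rewrite decomp_sum by lia. simpl Init.Nat.pred.
  assert (E : forall i, bin (S n) (S i) * (-1) ^ (S i) * poch g (S i) / poch c (S i) =
     bin n (S i) * (-1) ^ (S i) * poch g (S i) / poch c (S i) - g / c * (bin n i * (-1) ^ i * poch (g+1) i / poch (c+1) i)).
  { intros i. simpl bin. rewrite !poch_shift. assert (0 < poch (c+1) i) by (apply poch_pos; lra).
    simpl pow. field. lra. }
  rewrite (sum_eq _ _ n (fun i _ => E i)), minus_sum.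
  rewrite sum_scal_l.
  assert (E2 : sum_f_R0 (fun k => bin n k * (-1) ^ k * poch g k / poch c k) (S n) =
     bin n 0 * (-1) ^ 0 * poch g 0 / poch c 0 + sum_f_R0 (fun i => bin n (S i) * (-1) ^ S i * poch g (S i) / poch c (S i)) n).
  { rewrite decomp_sum by lia. reflexivity. }
  rewrite tech5, bin_gt in E2 by lia. simpl bin in *. simpl (bin (S n) 0).
  replace (0 * (-1) ^ S n * poch g (S n) / poch c (S n)) with 0 in E2 by (unfold Rdiv; ring).
  rewrite Rplus_0_r in E2. rewrite E2. rewrite bin_0. ring.
Qed.

Lemma CV_identity n : forall g c, 0 < c -> CVsum n g c = poch (c - g) n / poch c n.
Proof. induction n; intros g c Hc.
  - unfold CVsum. simpl. field.
  - rewrite CV_step, !IHn by lra.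
    replace (c + 1 - (g + 1)) with (c - g) by ring.
    rewrite (poch_shift c n). simpl poch. assert (0 < poch (c+1) n) by (apply poch_pos; lra).
    assert (Hn : poch c n * (c + INR n) = c * poch (c+1) n) by (rewrite <- poch_shift; reflexivity).
    assert (0 < c + INR n) by (pose proof (pos_INR n); lra).
    assert (0 < poch c n) by (apply poch_pos; lra).
    assert (Hn' : poch (c+1) n = poch c n * (c + INR n) / c) by (rewrite Hn; field; lra).
    rewrite Hn'. field. repeat split; lra.
Qed.

Lemma triangle_sum (f : nat -> nat -> R) N :
  sum_f_R0 (fun n => sum_f_R0 (fun k => f k (n - k)%nat) n) N =
  sum_f_R0 (fun k => sum_f_R0 (fun j => f k j) (N - k)) N.
Proof. induction N.
  - simpl. reflexivity.
  - rewrite tech5, IHN. rewrite (tech5 (fun k => sum_f_R0 (fun j => f k j) (S N - k)) N).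
    replace (S N - S N)%nat with 0%nat by lia. simpl (sum_f_R0 (fun j => f (S N) j) 0).
    rewrite tech5. replace (S N - S N)%nat with 0%nat by lia.
    assert (E : sum_f_R0 (fun k => sum_f_R0 (fun j => f k j) (S N - k)) N =
      sum_f_R0 (fun k => sum_f_R0 (fun j => f k j) (N - k) + f k (S N - k)%nat) N).
    { apply sum_eq. intros k Hk. replace (S N - k)%nat with (S (N - k)) by lia. rewrite tech5. reflexivity. }
    rewrite E, plus_sum. ring.
Qed.

Lemma aux_minus_plus (x y : R) : x = x - y + y.
Proof. ring. Qed.

Lemma tail_bound (a : nat -> R) la lb m : is_series a la -> is_series (fun j => Rabs (a j)) lb ->
  Rabs (la - sum_f_R0 a m) <= lb - sum_f_R0 (fun j => Rabs (a j)) m.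
Proof. intros Ha Hb.
  assert (T1 : is_series (fun k => a (S m + k)%nat) (la - sum_f_R0 a m)).
  { apply (is_series_incr_n a (S m)). lia. simpl Init.Nat.pred. rewrite sum_n_Reals.
    match goal with |- is_series _ ?X => replace X with la; [exact Ha|] end. change plus with Rplus. simpl. apply aux_minus_plus. }
  assert (T2 : is_series (fun k => Rabs (a (S m + k)%nat)) (lb - sum_f_R0 (fun j => Rabs (a j)) m)).
  { apply (is_series_incr_n (fun j => Rabs (a j)) (S m)). lia. simpl Init.Nat.pred. rewrite sum_n_Reals.
    match goal with |- is_series _ ?X => replace X with lb; [exact Hb|] end. change plus with Rplus. simpl. apply aux_minus_plus. }
  rewrite <- (is_series_unique _ _ T1), <- (is_series_unique _ _ T2).
  apply Series_Rabs. eexists; exact T2. Qed.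

Lemma finite_max (P : nat -> nat -> Prop) K :
  (forall k m m', (m <= m')%nat -> P k m -> P k m') ->
  (forall k, (k <= K)%nat -> exists m, P k m) -> exists N0, forall k, (k <= K)%nat -> P k N0.
Proof. intros Hmon. induction K; intros H.
  - destruct (H 0%nat (le_n 0)) as [m Hm]. exists m. intros k Hk. replace k with 0%nat by lia. auto.
  - destruct IHK as [N1 HN1]. intros; apply H; lia.
    destruct (H (S K) (le_n _)) as [m Hm]. exists (Nat.max N1 m). intros k Hk.
    destruct (Nat.eq_dec k (S K)) as [->|].
    + apply Hmon with m; auto; lia.
    + apply Hmon with N1; [lia|]. apply HN1; lia.
Qed.

Lemma sum_small (t : nat -> nat -> R) K N N0 d :
  (forall k m m', (m <= m')%nat -> t k m' <= t k m) ->
  (forall k, (k <= K)%nat -> t k N0 < d) -> (N >= K + N0)%nat ->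
  sum_f_R0 (fun k => t k (N - k)%nat) K <= INR (S K) * d.
Proof. intros Htmon HN0 HN. induction K.
    - simpl. rewrite Rmult_1_l. pose proof (HN0 0%nat (le_n _)). pose proof (Htmon 0%nat N0 (N - 0)%nat ltac:(lia)). lra.
    - rewrite tech5. rewrite (S_INR (S K)), Rmult_plus_distr_r, Rmult_1_l.
      pose proof (HN0 (S K) (le_n _)). pose proof (Htmon (S K) N0 (N - S K)%nat ltac:(lia)).
      assert (sum_f_R0 (fun k => t k (N - k)%nat) K <= INR (S K) * d); [|lra].
      apply IHK. intros; apply HN0; lia. lia.
Qed.

Lemma double_series (u : nat -> nat -> R) (U M : nat -> R) :
  (forall k, is_series (u k) (U k)) ->
  (forall k, is_series (fun j => Rabs (u k j)) (M k)) ->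
  ex_series M ->
  is_series (fun n => sum_f_R0 (fun k => u k (n - k)%nat) n) (Series U).
Proof. intros HU HM [SM HSM].
  assert (HUM : forall k, Rabs (U k) <= M k).
  { intros k. rewrite <- (is_series_unique _ _ (HU k)), <- (is_series_unique _ _ (HM k)).
    apply Series_Rabs. eexists; apply HM. }
  assert (EU : ex_series U).
  { apply (@ex_series_le R_AbsRing R_CompleteNormedModule) with (b := M). intros; apply HUM. eexists; eauto. }
  destruct EU as [SU HSU]. rewrite (is_series_unique _ _ HSU).
  assert (M0 : forall k, 0 <= M k) by (intros k; pose proof (HUM k); pose proof (Rabs_pos (U k)); lra).
  apply is_series_Reals in HSU. apply is_series_Reals in HSM. apply is_series_Reals.
  intros eps Heps.
  destruct (HSM (eps/3) ltac:(lra)) as [K HK].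
  destruct (HSU (eps/3) ltac:(lra)) as [N1 HN1].
  set (t := fun k m => M k - sum_f_R0 (fun j => Rabs (u k j)) m).
  assert (Ht0 : forall k m, Rabs (U k - sum_f_R0 (u k) m) <= t k m) by (intros; apply tail_bound; auto).
  assert (Htmon : forall k m m', (m <= m')%nat -> t k m' <= t k m).
  { intros k m m' Hm. unfold t.
    assert (sum_f_R0 (fun j => Rabs (u k j)) m <= sum_f_R0 (fun j => Rabs (u k j)) m'); [|lra].
    destruct (Nat.eq_dec m m') as [->|]; [lra|].
    rewrite (tech2 _ m m') by lia. pose proof (cond_pos_sum (fun i => Rabs (u k (S m + i)%nat)) (m' - S m) (fun i => Rabs_pos _)). lra. }
  set (delta := eps / 3 / INR (S K)).
  assert (Hdelta : 0 < delta) by (unfold delta; pose proof (lt_0_INR (S K) ltac:(lia)); pos).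
  destruct (finite_max (fun k m => t k m < delta) K) as [N0 HN0].
  { intros k m m' Hmm H. pose proof (Htmon k m m' Hmm). lra. }
  { intros k _. pose proof (HM k) as Hk. apply is_series_Reals in Hk. destruct (Hk delta Hdelta) as [m Hm].
    exists m. specialize (Hm m (le_n m)). unfold Rdist in Hm. unfold t. rewrite Rabs_minus_sym in Hm.
    pose proof (Rle_abs (M k - sum_f_R0 (fun j => Rabs (u k j)) m)). lra. }
  exists (N1 + K + N0 + 1)%nat. intros N HN.
  unfold Rdist. rewrite triangle_sum.
  assert (HB : Rabs (sum_f_R0 U N - sum_f_R0 (fun k => sum_f_R0 (fun j => u k j) (N - k)) N) <= sum_f_R0 (fun k => t k (N - k)%nat) N).
  { rewrite <- minus_sum. eapply Rle_trans. apply sum_f_R0_triangle. apply sum_Rle. intros k _. apply Ht0. }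
  assert (HS1 : sum_f_R0 (fun k => t k (N - k)%nat) K <= INR (S K) * delta).
  { apply (sum_small t K N N0 delta); auto. lia. }
  assert (HS2 : sum_f_R0 (fun i => t (S K + i)%nat (N - (S K + i))%nat) (N - S K) <= SM - sum_f_R0 M K).
  { specialize (HK N ltac:(lia)). 
    assert (E := tech2 M K N ltac:(lia)).
    assert (sum_f_R0 (fun i => t (S K + i)%nat (N - (S K + i))%nat) (N - S K) <= sum_f_R0 (fun i => M (S K + i)%nat) (N - S K)).
    { apply sum_Rle. intros i _. unfold t. pose proof (cond_pos_sum (fun j => Rabs (u (S K + i)%nat j)) (N - (S K + i)) (fun j => Rabs_pos _)). lra. }
    unfold Rdist in HK. pose proof (Rle_abs (sum_f_R0 M N - SM)). 
    assert (0 <= SM - sum_f_R0 M N).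
    { assert (sum_f_R0 M N <= SM); [|lra].
      replace SM with (Series M) by (apply is_series_unique; apply is_series_Reals; auto).
      apply sum_le_series; auto. eexists; apply is_series_Reals; eauto. }
    lra. }
  assert (HK2 : SM - sum_f_R0 M K < eps / 3).
  { specialize (HK K (le_n K)). unfold Rdist in HK. rewrite Rabs_minus_sym in HK. pose proof (Rle_abs (SM - sum_f_R0 M K)). lra. }
  rewrite (tech2 (fun k => t k (N - k)%nat) K N) in HB by lia.
  unfold delta in HS1. replace (INR (S K) * (eps / 3 / INR (S K))) with (eps/3) in HS1 by (field; apply not_0_INR; lia).
  specialize (HN1 N ltac:(lia)). unfold Rdist in HN1.
  pose proof (Rabs_triang (sum_f_R0 (fun k => sum_f_R0 (fun j => u k j) (N - k)) N - sum_f_R0 U N) (sum_f_R0 U N - SU)).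
  replace (sum_f_R0 (fun k => sum_f_R0 (fun j => u k j) (N - k)) N - sum_f_R0 U N + (sum_f_R0 U N - SU)) with
    (sum_f_R0 (fun k => sum_f_R0 (fun j => u k j) (N - k)) N - SU) in H by ring.
  rewrite Rabs_minus_sym in HB. idtac.  lra.
Qed.

Lemma poch_one m : poch 1 m = INR (Factorial.fact m).
Proof. induction m; simpl poch. simpl; ring. rewrite IHm, fact_simpl, mult_INR, S_INR. ring. Qed.

Lemma hypcoef_binom x m : hypcoef x 1 1 m = poch x m / INR (Factorial.fact m).
Proof. unfold hypcoef. rewrite poch_one. pose proof (fact_pos m). field. lra. Qed.

Lemma poch_add a k m : poch a (k + m) = poch a k * poch (a + INR k) m.
Proof. induction m. rewrite Nat.add_0_r; simpl; ring.
  rewrite Nat.add_succ_r. simpl poch. rewrite IHm, plus_INR. ring. Qed.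

Lemma poch_abs2 x j : Rabs (poch x j) <= poch (Rabs x) j.
Proof. induction j; simpl. rewrite Rabs_R1; lra.
  rewrite Rabs_mult. apply Rmult_le_compat; try apply Rabs_pos; auto.
  pose proof (Rabs_triang x (INR j)). rewrite (Rabs_right (INR j)) in H by (apply Rle_ge, pos_INR). lra. Qed.

Lemma poch_nonneg x j : 0 <= x -> 0 <= poch x j.
Proof. intros; induction j; simpl. lra. apply Rmult_le_pos; auto. pose proof (pos_INR j); lra. Qed.

Lemma poch_mono x y j : 0 <= x <= y -> poch x j <= poch y j.
Proof. intros H; induction j; simpl. lra. apply Rmult_le_compat; auto. apply poch_nonneg; lra.
  pose proof (pos_INR j); lra. lra. Qed.

Lemma is_series_Rscal_l (c0 : R) (a0 : nat -> R) l : is_series a0 l -> is_series (fun n => c0 * a0 n) (c0 * l).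
Proof. intros H. exact (is_series_scal_l c0 a0 l H). Qed.

Section Pf.
Variables (a be c z : R).
Hypothesis Hc : 0 < c.
Hypothesis Hz : 0 < z < 1/2.

Let w := z / (z - 1).
Let A k := hypcoef a (c - be) c k.
Let u k j := A k * (-1) ^ k * z ^ k * (hypcoef (a + INR k) 1 1 j * z ^ j).
Let U k := A k * w ^ k * Rpower (1 - z) (- a).

Lemma Pf_inner k : is_series (u k) (U k).
Proof. unfold u, U.
  assert (E : A k * w ^ k * Rpower (1 - z) (- a) = A k * (-1) ^ k * z ^ k * Rpower (1 - z) (- (a + INR k))).
  { unfold w. rewrite Ropp_plus_distr, Rpower_plus, (Rpower_Ropp _ (INR k)), Rpower_pow by lra.
    unfold Rdiv. rewrite Rpow_mult_distr, pow_inv.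
    replace (z - 1) with ((-1) * (1 - z)) by ring. rewrite Rpow_mult_distr, Rinv_mult.
    replace (/ (-1) ^ k) with ((-1)^k). 2:{ rewrite <- pow_inv. f_equal. field. }
    ring. }
  rewrite E. apply is_series_Rscal_l. apply binom_series. apply Rabs_def1; lra.
Qed.
Lemma hb_abs x j : Rabs (hypcoef x 1 1 j) <= hypcoef (Rabs x) 1 1 j.
Proof. rewrite !hypcoef_binom. unfold Rdiv. pose proof (fact_pos j). rewrite Rabs_mult, Rabs_inv, (Rabs_right (INR _)) by lra.
  apply Rmult_le_compat_r. left; apply Rinv_0_lt_compat; lra. apply poch_abs2. Qed.

Lemma hb_mono x y j : 0 <= x <= y -> hypcoef x 1 1 j <= hypcoef y 1 1 j.
Proof. intros. rewrite !hypcoef_binom. unfold Rdiv. pose proof (fact_pos j).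
  apply Rmult_le_compat_r. left; apply Rinv_0_lt_compat; lra. apply poch_mono; auto. Qed.

Let aa := Rabs a.
Let q := z / (1 - z).

Lemma Pf_abs_bound k j : Rabs (u k j) <= Rabs (A k) * z ^ k * (hypcoef (aa + INR k) 1 1 j * z ^ j).
Proof. unfold u. assert (0 < z ^ k) by (apply pow_lt; lra). assert (0 < z ^ j) by (apply pow_lt; lra).
  rewrite !Rabs_mult, pow_1_abs, (Rabs_right (z ^ k)), (Rabs_right (z ^ j)) by lra. rewrite Rmult_1_r.
  apply Rmult_le_compat_l. apply Rmult_le_pos; [apply Rabs_pos|lra].
  apply Rmult_le_compat_r. lra. eapply Rle_trans. apply hb_abs. apply hb_mono.
  split. apply Rabs_pos. pose proof (Rabs_triang a (INR k)). rewrite (Rabs_right (INR k)) in H1 by (apply Rle_ge, pos_INR). unfold aa; lra. Qed.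

Lemma Pf_abs_series k : ex_series (fun j => Rabs (u k j)).
Proof. apply (@ex_series_le R_AbsRing R_CompleteNormedModule) with (b := fun j => Rabs (A k) * z ^ k * (hypcoef (aa + INR k) 1 1 j * z ^ j)).
  intros j. change norm with Rabs. rewrite Rabs_Rabsolu. apply Pf_abs_bound.
  eexists. apply is_series_Rscal_l. apply binom_series. apply Rabs_def1; lra. Qed.

Let M k := Series (fun j => Rabs (u k j)).

Lemma Pf_M_bound k : M k <= Rpower (1 - z) (- aa) * Rabs (A k * q ^ k).
Proof. unfold M. eapply Rle_trans. apply Series_le with (b := fun j => Rabs (A k) * z ^ k * (hypcoef (aa + INR k) 1 1 j * z ^ j)).
  intros j; split; [apply Rabs_pos| apply Pf_abs_bound].
  eexists. apply is_series_Rscal_l. apply binom_series. apply Rabs_def1; lra.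
  rewrite (is_series_unique _ _ (is_series_Rscal_l _ _ _ (binom_series (aa + INR k) z ltac:(apply Rabs_def1; lra)))).
  rewrite Ropp_plus_distr, Rpower_plus, (Rpower_Ropp (1 - z) (INR k)), Rpower_pow by lra.
  unfold q. rewrite Rabs_mult, <- RPow_abs, (Rabs_right (z / (1 - z))). unfold Rdiv. rewrite Rpow_mult_distr, pow_inv. right; ring.
  apply Rle_ge, Rlt_le, Rdiv_lt_0_compat; lra. Qed.

Lemma Pf_M_ex : ex_series M.
Proof. apply (@ex_series_le R_AbsRing R_CompleteNormedModule) with (b := fun k => Rpower (1 - z) (- aa) * Rabs (A k * q ^ k)).
  intros k. change norm with Rabs. rewrite Rabs_right. apply Pf_M_bound.
  apply Rle_ge, Series_nonneg. intros; apply Rabs_pos. apply Pf_abs_series.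
  destruct (hyp_abs_conv a (c - be) c q Hc) as [l Hl]. unfold q; split. apply Rdiv_lt_0_compat; lra.
  apply Rmult_lt_reg_r with (1 - z). lra. unfold Rdiv. rewrite Rmult_assoc, Rinv_l by lra. lra.
  eexists. apply is_series_Rscal_l. exact Hl. Qed.

Lemma Pf_DS : is_series (fun n => sum_f_R0 (fun k => u k (n - k)%nat) n) (Series U).
Proof. apply double_series with (M := M). apply Pf_inner.
  intros k. apply Series_correct. apply Pf_abs_series. apply Pf_M_ex. Qed.

Lemma Pf_coef n : sum_f_R0 (fun k => u k (n - k)%nat) n = hypcoef a be c n * z ^ n.
Proof.
  assert (E : forall k, (k <= n)%nat -> u k (n - k)%nat =
     z ^ n * (poch a n / INR (Factorial.fact n)) * (bin n k * (-1) ^ k * poch (c - be) k / poch c k)).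
  { intros k Hk. unfold u, A. rewrite hypcoef_binom. unfold hypcoef.
    assert (Ep : poch a n = poch a k * poch (a + INR k) (n - k)).
    { rewrite <- poch_add. f_equal. lia. }
    assert (Ez : z ^ n = z ^ k * z ^ (n - k)) by (rewrite <- pow_add; f_equal; lia).
    pose proof (bin_fact n k Hk) as Hb.
    rewrite Ep, Ez. pose proof (fact_pos n). pose proof (fact_pos k). pose proof (fact_pos (n - k)).
    assert (0 < poch c k) by (apply poch_pos; lra).
    assert (bin n k <> 0) by (intro Hz0; rewrite Hz0 in Hb; lra). rewrite <- Hb. field. repeat split; lra. }
  rewrite (sum_eq _ _ n E). rewrite sum_scal_l. fold (CVsum n (c - be) c). rewrite CV_identity by lra.
  replace (c - (c - be)) with be by ring. unfold hypcoef. pose proof (fact_pos n).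
  assert (0 < poch c n) by (apply poch_pos; lra). field. lra.
Qed.

End Pf.

Lemma Pfaff_pos a be c z : 0 < c -> 0 < z < 1/2 ->
  is_series (fun n => hypcoef a be c n * z ^ n) (Rpower (1 - z) (- a) * hypseries a (c - be) c (z / (z - 1))).
Proof. intros Hc Hz. pose proof (Pf_DS a be c z Hc Hz) as H.
  eapply is_series_ext in H. 2:{ intros n; apply Pf_coef; auto. }
  match goal with |- is_series _ ?X => replace X with (Series (fun k => hypcoef a (c - be) c k * (z / (z - 1)) ^ k * Rpower (1 - z) (- a))) end.
  exact H. rewrite Series_scal_r. unfold hypseries. ring.
Qed.


Lemma hypseries_0 a b c : hypseries a b c 0 = 1.
Proof. rewrite hyp_PSeries, PSeries_0. unfold hypcoef; simpl. field. Qed.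

Lemma hypcoef_sym a b c n : hypcoef a b c n = hypcoef b a c n.
Proof. unfold hypcoef. rewrite (Rmult_comm (poch a n)). reflexivity. Qed.

Lemma hypseries_sym a b c x : hypseries a b c x = hypseries b a c x.
Proof. unfold hypseries. apply Series_ext. intros; rewrite hypcoef_sym; auto. Qed.

Lemma Rpower_inv_base y e : 0 < y -> Rpower (/ y) e = Rpower y (- e).
Proof. intros. unfold Rpower. rewrite ln_Rinv by auto. f_equal; ring. Qed.

Lemma Pfaff a b c x : 0 < c -> -1 < x < 1/2 ->
  hypseries a b c x = Rpower (1 - x) (- a) * hypseries a (c - b) c (x / (x - 1)).
Proof. intros Hc Hx.
  destruct (Rtotal_order x 0) as [Hn|[H0|Hp]].
  - set (z := x / (x - 1)).
    assert (Hz : 0 < z < 1/2).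
    { unfold z. split. apply Rdiv_neg_neg; lra.
      apply Rmult_lt_reg_r with (1 - x). lra. replace (x / (x - 1) * (1 - x)) with (- x) by (field; lra). lra. }
    pose proof (Pfaff_pos a (c - b) c z Hc Hz) as H.
    assert (Ezz : z / (z - 1) = x) by (unfold z; field; split; lra).
    assert (E1z : 1 - z = / (1 - x)) by (unfold z; field; split; lra).
    rewrite Ezz, E1z in H. replace (c - (c - b)) with b in H by ring.
    rewrite Rpower_inv_base, Ropp_involutive in H by lra.
    apply is_series_unique in H. fold z. unfold hypseries at 2. rewrite H.
    rewrite <- Rmult_assoc, <- Rpower_plus, Rplus_opp_l, Rpower_O by lra. ring.
  - subst. replace (0 / (0 - 1)) with 0 by field. rewrite !hypseries_0. rewrite Rminus_0_r. unfold Rpower. rewrite ln_1, Rmult_0_r, exp_0. ring.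
  - apply is_series_unique. apply Pfaff_pos; auto. lra.
Qed.

Lemma Euler_loc a b c x : 0 < c -> -1 < x < 1/2 ->
  hypseries a b c x = Rpower (1 - x) (c - a - b) * hypseries (c - a) (c - b) c x.
Proof. intros Hc Hx. rewrite Pfaff by auto. set (w := x / (x - 1)).
  assert (Hw : -1 < w < 1/2).
  { unfold w. split.
    - apply Rmult_lt_reg_r with (1 - x). lra. replace (x / (x - 1) * (1 - x)) with (- x) by (field; lra). lra.
    - apply Rmult_lt_reg_r with (1 - x). lra. replace (x / (x - 1) * (1 - x)) with (- x) by (field; lra). lra. }
  rewrite hypseries_sym, Pfaff by auto.
  assert (Eww : w / (w - 1) = x) by (unfold w; field; split; lra).
  assert (E1w : 1 - w = / (1 - x)) by (unfold w; field; split; lra).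
  rewrite Eww, E1w, Rpower_inv_base, Ropp_involutive by lra.
  rewrite hypseries_sym. rewrite <- Rmult_assoc, <- Rpower_plus. f_equal. f_equal. ring.
Qed.

Lemma PS_mult_abs_conv (p q : nat -> R) r : ex_series (fun n => Rabs (p n * r ^ n)) -> ex_series (fun n => Rabs (q n * r ^ n)) ->
  ex_series (fun n => Rabs (PS_mult p q n * r ^ n)).
Proof. intros [lp Hp] [lq Hq].
  pose proof (is_series_mult_pos _ _ _ _ Hp Hq (fun n => Rabs_pos _) (fun n => Rabs_pos _)) as H.
  apply (@ex_series_le R_AbsRing R_CompleteNormedModule) with (b := fun n => sum_f_R0 (fun k => Rabs (p k * r ^ k) * Rabs (q (n - k)%nat * r ^ (n - k))) n).
  2: eexists; exact H.
  intros n. change norm with Rabs. rewrite Rabs_Rabsolu. unfold PS_mult.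
  rewrite Rmult_comm, scal_sum. eapply Rle_trans. apply sum_f_R0_triangle. apply sum_Rle. intros k Hk.
  rewrite <- !Rabs_mult. right. f_equal. assert (E : r ^ n = r ^ k * r ^ (n - k)) by (rewrite <- pow_add; f_equal; lia). rewrite E. ring.
Qed.

Lemma Euler a b c x : 0 < c -> Rabs x < 1 ->
  hypseries a b c x = Rpower (1 - x) (c - a - b) * hypseries (c - a) (c - b) c x.
Proof. intros Hc Hx.
  set (p := hypcoef (a + b - c) 1 1). set (q := hypcoef (c - a) (c - b) c).
  assert (Hp1 : Rbar_le 1 (CV_radius p)) by (apply hyp_radius; lra).
  assert (Hq1 : Rbar_le 1 (CV_radius q)) by (apply hyp_radius; lra).
  assert (Hpq1 : Rbar_le 1 (CV_radius (PS_mult p q))).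
  { apply radius_ge_1. intros r Hr. apply PS_mult_abs_conv; apply hyp_abs_conv; auto; lra. }
  assert (Hprod : forall y, Rabs y < 1 -> Rpower (1 - y) (c - a - b) * hypseries (c - a) (c - b) c y = PSeries (PS_mult p q) y).
  { intros y Hy. rewrite PSeries_mult by (apply lt_radius; auto). f_equal.
    replace (c - a - b) with (- (a + b - c)) by ring. symmetry. apply is_series_unique. apply binom_series; auto. }
  assert (Hcoef : forall n, hypcoef a b c n = PS_mult p q n).
  { intros n. apply PSeries_ext_recip.
    - eapply Rbar_lt_le_trans; [|apply hyp_radius; lra]. simpl; lra.
    - eapply Rbar_lt_le_trans; [|exact Hpq1]. simpl; lra.
    - assert (Hh: 0 < 1/2) by lra. exists (mkposreal _ Hh). intros y Hy.
      change (Rabs (y - 0) < 1/2) in Hy. rewrite Rminus_0_r in Hy.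
      pose proof (Rabs_def2 _ _ Hy).
      rewrite <- hyp_PSeries, <- Hprod by lra. apply Euler_loc; auto; lra. }
  rewrite Hprod by auto. rewrite hyp_PSeries. apply PSeries_ext. auto.
Qed.

Lemma ln_le' x y : 0 < x -> x <= y -> ln x <= ln y.
Proof. intros Hx [H|H]. left; apply ln_increasing; auto. subst; lra. Qed.

Lemma exp_le' x y : x <= y -> exp x <= exp y.
Proof. intros [H|H]. left; apply exp_increasing; auto. subst; lra. Qed.

Lemma exp_convex u v t : 0 <= t <= 1 -> exp (t * u + (1 - t) * v) <= t * exp u + (1 - t) * exp v.
Proof. intros Ht. set (w := t * u + (1 - t) * v).
  assert (H1 : exp w * (1 + (u - w)) <= exp u).
  { replace (exp u) with (exp w * exp (u - w)) by (rewrite <- exp_plus; f_equal; ring).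
    apply Rmult_le_compat_l. left; apply exp_pos. apply exp_ineq1_le. }
  assert (H2 : exp w * (1 + (v - w)) <= exp v).
  { replace (exp v) with (exp w * exp (v - w)) by (rewrite <- exp_plus; f_equal; ring).
    apply Rmult_le_compat_l. left; apply exp_pos. apply exp_ineq1_le. }
  assert (E : t * (exp w * (1 + (u - w))) + (1 - t) * (exp w * (1 + (v - w))) = exp w) by (unfold w; ring).
  nra. Qed.

Lemma ln_concave y1 y2 t : 0 < y1 -> 0 < y2 -> 0 <= t <= 1 ->
  t * ln y1 + (1 - t) * ln y2 <= ln (t * y1 + (1 - t) * y2).
Proof. intros H1 H2 Ht. rewrite <- (ln_exp (t * ln y1 + (1 - t) * ln y2)). apply ln_le'. apply exp_pos.
  pose proof (exp_convex (ln y1) (ln y2) t Ht). rewrite !exp_ln in H by auto. exact H. Qed.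

Definition convex_set (P : R -> Prop) := forall s1 s2 t, P s1 -> P s2 -> 0 <= t <= 1 -> P (t * s1 + (1 - t) * s2).

Lemma LC_ext P f g : convex_set P -> (forall s, P s -> f s = g s) -> log_convex_on P f -> log_convex_on P g.
Proof. intros HP E [H1 H2]. split. intros s Hs; rewrite <- E; auto.
  intros s1 s2 t Hs1 Hs2 Ht. rewrite <- !E; auto. Qed.

Lemma LC_const P K : 0 < K -> log_convex_on P (fun _ => K).
Proof. intros HK. split; auto. intros. lra. Qed.

Lemma LC_mul P f g : convex_set P -> log_convex_on P f -> log_convex_on P g -> log_convex_on P (fun s => f s * g s).
Proof. intros HP [F1 F2] [G1 G2]. split. intros s Hs; apply Rmult_lt_0_compat; auto.
  intros s1 s2 t Hs1 Hs2 Ht. pose proof (F2 s1 s2 t Hs1 Hs2 Ht). pose proof (G2 s1 s2 t Hs1 Hs2 Ht).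
  pose proof (HP s1 s2 t Hs1 Hs2 Ht) as Hm.
  rewrite !ln_mult by auto. lra. Qed.

Lemma LC_inv_lin P g : convex_set P -> (forall s, P s -> 0 < s + g) -> log_convex_on P (fun s => / (s + g)).
Proof. intros HP Hg. split. intros s Hs; apply Rinv_0_lt_compat; auto.
  intros s1 s2 t Hs1 Hs2 Ht. pose proof (HP s1 s2 t Hs1 Hs2 Ht) as Hm.
  rewrite !ln_Rinv by auto. pose proof (ln_concave (s1 + g) (s2 + g) t (Hg _ Hs1) (Hg _ Hs2) Ht).
  replace (t * (s1 + g) + (1 - t) * (s2 + g)) with (t * s1 + (1 - t) * s2 + g) in H by ring. lra. Qed.

Lemma LC_rpow P q al be : 0 < q -> log_convex_on P (fun s => Rpower q (al * s + be)).
Proof. intros Hq. split. intros; apply exp_pos.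
  intros. rewrite !ln_Rpower. right; ring. Qed.

Lemma young A B u v t : 0 < A -> 0 < B -> 0 < u -> 0 < v -> 0 <= t <= 1 ->
  exp (t * ln u + (1 - t) * ln v) <= exp (t * ln A + (1 - t) * ln B) * (t * (u / A) + (1 - t) * (v / B)).
Proof. intros HA HB Hu Hv Ht.
  replace (t * ln u + (1 - t) * ln v) with ((t * ln A + (1 - t) * ln B) + (t * ln (u / A) + (1 - t) * ln (v / B))).
  2:{ unfold Rdiv. rewrite !ln_mult, !ln_Rinv by (auto; apply Rinv_0_lt_compat; auto). ring. }
  rewrite exp_plus. apply Rmult_le_compat_l. left; apply exp_pos.
  pose proof (exp_convex (ln (u / A)) (ln (v / B)) t Ht). rewrite !exp_ln in H by (apply Rdiv_lt_0_compat; auto). exact H. Qed.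

Lemma is_series_Rplus (a0 b0 : nat -> R) la lb : is_series a0 la -> is_series b0 lb -> is_series (fun n => a0 n + b0 n) (la + lb).
Proof. intros H1 H2. exact (is_series_plus _ _ _ _ H1 H2). Qed.

Lemma LC_series P (f : nat -> R -> R) F : convex_set P ->
  (forall k, log_convex_on P (f k)) -> (forall s, P s -> is_series (fun k => f k s) (F s)) ->
  log_convex_on P F.
Proof. intros HP Hf HF.
  assert (Fpos : forall s, P s -> 0 < F s).
  { intros s Hs. rewrite <- (is_series_unique _ _ (HF s Hs)).
    eapply Rlt_le_trans; [|apply (term_le_series (fun k => f k s) 0)].
    apply (proj1 (Hf 0%nat)); auto. intros k; left; apply (proj1 (Hf k)); auto. eexists; apply HF; auto. }
  split; auto.
  intros s1 s2 t Hs1 Hs2 Ht. pose proof (HP s1 s2 t Hs1 Hs2 Ht) as Hm. set (m := t * s1 + (1 - t) * s2) in *.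
  set (A := F s1). set (B := F s2). pose proof (Fpos _ Hs1) as HA. pose proof (Fpos _ Hs2) as HB.
  set (G := exp (t * ln A + (1 - t) * ln B)).
  assert (Hle : F m <= G).
  { assert (Hb : is_series (fun k => G * (t * (f k s1 / A) + (1 - t) * (f k s2 / B))) (G * (t * (A / A) + (1 - t) * (B / B)))).
    { apply is_series_Rscal_l.
      assert (H1 := is_series_Rscal_l (t / A) _ _ (HF s1 Hs1)).
      assert (H2 := is_series_Rscal_l ((1 - t) / B) _ _ (HF s2 Hs2)).
      pose proof (is_series_Rplus _ _ _ _ H1 H2) as H3.
      replace (t * (A / A) + (1 - t) * (B / B)) with (t / A * F s1 + (1 - t) / B * F s2) by (unfold A, B; field; repeat split; lra).
      eapply is_series_ext; [|exact H3]. intros n; simpl. unfold Rdiv; ring. }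
    assert (EG : G = G * (t * (A / A) + (1 - t) * (B / B))). { unfold Rdiv. rewrite (Rinv_r A), (Rinv_r B). ring. apply Rgt_not_eq; exact HB. apply Rgt_not_eq; exact HA. } rewrite EG.
    rewrite <- (is_series_unique _ _ (HF m Hm)), <- (is_series_unique _ _ Hb).
    apply Series_le. 2:{ eexists; exact Hb. }
    intros k. destruct (Hf k) as [Hk1 Hk2]. split. left; apply Hk1; auto.
    eapply Rle_trans. 2:{ apply young; auto. }
    rewrite <- (exp_ln (f k m)) by auto. apply exp_le'. apply Hk2; auto. }
  rewrite <- (ln_exp (t * ln A + (1 - t) * ln B)). apply ln_le'. apply Fpos; auto. exact Hle.
Qed.

Lemma LC_add P f g : convex_set P -> log_convex_on P f -> log_convex_on P g -> log_convex_on P (fun s => f s + g s).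
Proof. intros HP [F1 F2] [G1 G2].
  assert (Hpos : forall s, P s -> 0 < f s + g s) by (intros s Hs; pose proof (F1 s Hs); pose proof (G1 s Hs); lra).
  split; auto. intros s1 s2 t Hs1 Hs2 Ht. pose proof (HP s1 s2 t Hs1 Hs2 Ht) as Hm. set (m := t * s1 + (1 - t) * s2) in *.
  pose proof (Hpos _ Hs1) as HA. pose proof (Hpos _ Hs2) as HB.
  rewrite <- (ln_exp (t * ln (f s1 + g s1) + (1 - t) * ln (f s2 + g s2))). apply ln_le'. apply Hpos; auto.
  assert (Y1 : f m <= exp (t * ln (f s1 + g s1) + (1 - t) * ln (f s2 + g s2)) * (t * (f s1 / (f s1 + g s1)) + (1 - t) * (f s2 / (f s2 + g s2)))).
  { eapply Rle_trans. 2:{ apply young; auto. }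
    rewrite <- (exp_ln (f m)) by auto. apply exp_le'. apply F2; auto. }
  assert (Y2 : g m <= exp (t * ln (f s1 + g s1) + (1 - t) * ln (f s2 + g s2)) * (t * (g s1 / (f s1 + g s1)) + (1 - t) * (g s2 / (f s2 + g s2)))).
  { eapply Rle_trans. 2:{ apply young; auto. }
    rewrite <- (exp_ln (g m)) by auto. apply exp_le'. apply G2; auto. }
  set (E := exp (t * ln (f s1 + g s1) + (1 - t) * ln (f s2 + g s2))) in *.
  assert (EE : E = E * (t * (f s1 / (f s1 + g s1)) + (1 - t) * (f s2 / (f s2 + g s2))) + E * (t * (g s1 / (f s1 + g s1)) + (1 - t) * (g s2 / (f s2 + g s2)))).
  { field. split; apply Rgt_not_eq; assumption. }
  lra.
Qed.

Lemma LC_ratio P be g : convex_set P -> g <= be -> (forall s, P s -> 0 < s + g) ->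
  log_convex_on P (fun s => (s + be) / (s + g)).
Proof. intros HP Hbg Hg. destruct (Req_dec be g) as [->|Hne].
  - apply LC_ext with (f := fun _ => 1); auto. intros s Hs. field. apply Rgt_not_eq, Hg; auto. apply LC_const; lra.
  - apply LC_ext with (f := fun s => 1 + (be - g) * / (s + g)); auto.
    intros s Hs. field. apply Rgt_not_eq, Hg; auto.
    apply LC_add; auto. apply LC_const; lra. apply LC_mul; auto. apply LC_const; lra. apply LC_inv_lin; auto.
Qed.

Lemma Req_conv (x y : R) : x = y -> x = y.
Proof. auto. Qed.

Lemma LC_invpoch P g k : convex_set P -> (forall s, P s -> 0 < s + g) -> log_convex_on P (fun s => / poch (s + g) k).
Proof. intros HP Hg. induction k.
  - apply LC_ext with (f := fun _ => 1); auto. intros; simpl; field. apply LC_const; lra.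
  - apply LC_ext with (f := fun s => / poch (s + g) k * / (s + (g + INR k))); auto.
    intros s Hs. simpl poch. pose proof (Hg s Hs). assert (0 < poch (s + g) k) by (apply poch_pos; auto).
    pose proof (pos_INR k). field. split; lra.
    apply LC_mul; auto. apply LC_inv_lin; auto. intros s Hs; pose proof (Hg s Hs); pose proof (pos_INR k); lra.
Qed.

Lemma LC_ratiopoch P be g k : convex_set P -> g <= be -> (forall s, P s -> 0 < s + g) ->
  log_convex_on P (fun s => poch (s + be) k / poch (s + g) k).
Proof. intros HP Hbg Hg. induction k.
  - apply LC_ext with (f := fun _ => 1); auto. intros; simpl; field. apply LC_const; lra.
  - apply LC_ext with (f := fun s => poch (s + be) k / poch (s + g) k * ((s + (be + INR k)) / (s + (g + INR k)))); auto.
    intros s Hs. simpl poch. pose proof (Hg s Hs). assert (0 < poch (s + g) k) by (apply poch_pos; auto).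
    pose proof (pos_INR k). field. split; lra.
    apply LC_mul; auto. apply LC_ratio; auto. lra. intros s Hs; pose proof (Hg s Hs); pose proof (pos_INR k); lra.
Qed.

Lemma LC_scal P K f : convex_set P -> 0 < K -> log_convex_on P f -> log_convex_on P (fun s => K * f s).
Proof. intros. apply LC_mul; auto. apply LC_const; auto. Qed.

Lemma LC_hyp_ratio P A0 be g y : convex_set P -> 0 < A0 -> 0 < y < 1 -> g <= be -> (forall s, P s -> 0 < s + g) ->
  log_convex_on P (fun s => hypseries A0 (s + be) (s + g) y).
Proof. intros HP HA Hy Hbg Hg.
  apply LC_series with (f := fun k s => (poch A0 k * y ^ k / INR (Factorial.fact k)) * (poch (s + be) k / poch (s + g) k)); auto.
  - intros k. apply LC_scal; auto. pos. apply LC_ratiopoch; auto.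
  - intros s Hs. eapply is_series_ext; [|apply hyp_is_series]. 2: apply Hg; auto. 2: apply Rabs_def1; lra.
    intros n. unfold hypcoef. pose proof (Hg s Hs). assert (0 < poch (s + g) n) by (apply poch_pos; auto).
    pose proof (fact_pos n). apply Req_conv. field; repeat split; lra.
Qed.

Lemma LC_hyp_inv P A0 B0 g y : convex_set P -> 0 < A0 -> 0 < B0 -> 0 < y < 1 -> (forall s, P s -> 0 < s + g) ->
  log_convex_on P (fun s => hypseries A0 B0 (s + g) y).
Proof. intros HP HA HB Hy Hg.
  apply LC_series with (f := fun k s => (poch A0 k * poch B0 k * y ^ k / INR (Factorial.fact k)) * / poch (s + g) k); auto.
  - intros k. apply LC_scal; auto. pos. apply LC_invpoch; auto.
  - intros s Hs. eapply is_series_ext; [|apply hyp_is_series]. 2: apply Hg; auto. 2: apply Rabs_def1; lra.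
    intros n. unfold hypcoef. pose proof (Hg s Hs). assert (0 < poch (s + g) n) by (apply poch_pos; auto).
    pose proof (fact_pos n). apply Req_conv. field; repeat split; lra.
Qed.

Lemma formD a b c x : 0 < x < 1 -> hyp2F1 a b c x = hypseries a b c x.
Proof. intros Hx. unfold hyp2F1. destruct (Rlt_dec (Rabs x) 1) as [H|H]; auto.
  exfalso; apply H; apply Rabs_def1; lra. Qed.

Lemma formE a b c x : 0 < c -> 0 < x < 1 -> hyp2F1 a b c x = Rpower (1 - x) (c - a - b) * hypseries (c - a) (c - b) c x.
Proof. intros Hc Hx. rewrite formD by auto. apply Euler; auto. apply Rabs_def1; lra. Qed.

Lemma formN a b c x : 0 < c -> x < 0 -> hyp2F1 a b c x = Rpower (1 - x) (- a) * hypseries a (c - b) c (x / (x - 1)).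
Proof. intros Hc Hx. unfold hyp2F1. destruct (Rlt_dec (Rabs x) 1) as [H|H].
  - apply Pfaff; auto. pose proof (Rabs_def2 _ _ H). lra.
  - destruct (Rlt_dec x 0); [reflexivity | lra].
Qed.

Lemma z_range x : x < 0 -> 0 < x / (x - 1) < 1.
Proof. intros Hx. split. apply Rdiv_neg_neg; lra.
  apply Rmult_lt_reg_r with (1 - x). lra. replace (x / (x - 1) * (1 - x)) with (- x) by (field; lra). lra. Qed.

Lemma formN' a b c x : 0 < c -> x < 0 -> hyp2F1 a b c x = Rpower (1 - x) (- b) * hypseries b (c - a) c (x / (x - 1)).
Proof. intros Hc Hx. unfold hyp2F1. destruct (Rlt_dec (Rabs x) 1) as [H|H].
  - rewrite hypseries_sym. apply Pfaff; auto. pose proof (Rabs_def2 _ _ H). lra.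
  - destruct (Rlt_dec x 0) as [_|]; [|lra].
    pose proof (z_range x Hx) as Hz.
    rewrite Euler by (auto; apply Rabs_def1; lra).
    assert (E1z : 1 - x / (x - 1) = / (1 - x)) by (field; split; lra).
    rewrite E1z, Rpower_inv_base by lra. replace (c - (c - b)) with b by ring.
    rewrite hypseries_sym, <- Rmult_assoc, <- Rpower_plus. f_equal. f_equal. ring.
Qed.

Lemma conv_pos : convex_set (fun c => 0 < c).
Proof. intros s1 s2 t H1 H2 Ht. destruct (Req_dec t 0) as [->|Ht0]. lra. nra. Qed.

Lemma conv_nneg : convex_set (fun c => 0 <= c).
Proof. intros s1 s2 t H1 H2 Ht. nra. Qed.

Lemma part_b a b x :
     ((a > 0 /\ b > 0 /\ 0 < x < 1) \/
      (a < 0 /\ x < 0 /\ b > 0) \/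
      (b < 0 /\ x < 0 /\ a > 0)) ->
     log_convex_on (fun c => 0 < c) (fun c => hyp2F1 a b c x).
Proof. pose proof conv_pos as HP. intros [[Ha [Hb Hx]]|[[Ha [Hx Hb]]|[Hb [Hx Ha]]]].
  - apply LC_ext with (f := fun s => hypseries a b (s + 0) x); auto.
    intros s Hs. rewrite formD by auto. f_equal; ring.
    apply LC_hyp_inv; auto; intros; lra.
  - pose proof (z_range x Hx).
    apply LC_ext with (f := fun s => Rpower (1 - x) (0 * s + - b) * hypseries b (s + - a) (s + 0) (x / (x - 1))); auto.
    intros s Hs. rewrite formN' by auto. f_equal; [f_equal; ring | f_equal; ring].
    apply LC_mul; auto. apply LC_rpow; lra. apply LC_hyp_ratio; auto; intros; lra.
  - pose proof (z_range x Hx).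
    apply LC_ext with (f := fun s => Rpower (1 - x) (0 * s + - a) * hypseries a (s + - b) (s + 0) (x / (x - 1))); auto.
    intros s Hs. rewrite formN by auto. f_equal; [f_equal; ring | f_equal; ring].
    apply LC_mul; auto. apply LC_rpow; lra. apply LC_hyp_ratio; auto; intros; lra.
Qed.

Lemma part_c a b c x :
     ((a > 0 /\ b > c /\ c > 0 /\ 0 < x < 1) \/
      (a < 0 /\ b < c /\ c > 0 /\ 0 < x < 1) \/
      (a > 0 /\ b < c /\ c > 0 /\ x < 0)) ->
     log_convex_on (fun mu => 0 <= mu) (fun mu => hyp2F1 a (b + mu) (c + mu) x).
Proof. pose proof conv_nneg as HP. intros [[Ha [Hb [Hc Hx]]]|[[Ha [Hb [Hc Hx]]]|[Ha [Hb [Hc Hx]]]]].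
  - apply LC_ext with (f := fun s => hypseries a (s + b) (s + c) x); auto.
    intros s Hs. rewrite formD by auto. f_equal; ring.
    apply LC_hyp_ratio; auto; intros; lra.
  - apply LC_ext with (f := fun s => Rpower (1 - x) (0 * s + (c - a - b)) * hypseries (c - b) (s + (c - a)) (s + c) x); auto.
    intros s Hs. rewrite formE by lra. rewrite hypseries_sym. f_equal; [f_equal; ring | f_equal; ring].
    apply LC_mul; auto. apply LC_rpow; lra. apply LC_hyp_ratio; auto; intros; lra.
  - pose proof (z_range x Hx).
    apply LC_ext with (f := fun s => Rpower (1 - x) (0 * s + - a) * hypseries a (c - b) (s + c) (x / (x - 1))); auto.
    intros s Hs. rewrite formN by lra. f_equal; [f_equal; ring | f_equal; ring].
    apply LC_mul; auto. apply LC_rpow; lra. apply LC_hyp_inv; auto; intros; lra.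
Qed.

Lemma part_d a b c x :
     ((a < c /\ b >= c /\ c > 0 /\ x < 0) \/
      (a < c /\ b < c /\ c > 0 /\ 0 < x < 1)) ->
     log_convex_on (fun mu => 0 <= mu) (fun mu => hyp2F1 (a + mu) (b + mu) (c + mu) x).
Proof. pose proof conv_nneg as HP. intros [[Ha [Hb [Hc Hx]]]|[Ha [Hb [Hc Hx]]]].
  - pose proof (z_range x Hx).
    apply LC_ext with (f := fun s => Rpower (1 - x) ((-1) * s + - b) * hypseries (c - a) (s + b) (s + c) (x / (x - 1))); auto.
    intros s Hs. rewrite formN' by lra. rewrite hypseries_sym. f_equal; [f_equal; ring | f_equal; ring].
    apply LC_mul; auto. apply LC_rpow; lra. apply LC_hyp_ratio; auto; intros; lra.
  - apply LC_ext with (f := fun s => Rpower (1 - x) ((-1) * s + (c - a - b)) * hypseries (c - a) (c - b) (s + c) x); auto.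
    intros s Hs. rewrite formE by lra. f_equal; [f_equal; ring | f_equal; ring].
    apply LC_mul; auto. apply LC_rpow; lra. apply LC_hyp_inv; auto; intros; lra.
Qed.

Lemma sum_rev (f : nat -> R) n : sum_f_R0 f n = sum_f_R0 (fun k => f (n - k)%nat) n.
Proof. revert f; induction n; intros f. simpl; reflexivity.
  rewrite decomp_sum by lia. simpl Init.Nat.pred. rewrite (IHn (fun k => f (S k))).
  rewrite tech5. replace (S n - S n)%nat with 0%nat by lia.
  rewrite Rplus_comm. f_equal. apply sum_eq. intros i Hi. f_equal. lia. Qed.

Lemma sum_neg (f : nat -> R) n : (forall k, (k <= n)%nat -> f k < 0) -> sum_f_R0 f n < 0.
Proof. induction n; intros H. simpl; apply H; lia. rewrite tech5. pose proof (H (S n) (le_n _)).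
  assert (sum_f_R0 f n < 0) by (apply IHn; intros; apply H; lia). lra. Qed.

Section PA.
Variables (c d del : R).
Hypothesis Hc : 0 < c.
Hypothesis Hcd : c < d.
Hypothesis Hdel : 0 < del.

Let al j := poch c j / poch (c + del) j.
Let be j := poch d j / poch (d + del) j.

Lemma al_pos j : 0 < al j. Proof. unfold al; pos; apply poch_pos; lra. Qed.
Lemma be_pos j : 0 < be j. Proof. unfold be; pos; apply poch_pos; lra. Qed.

Lemma al_S j : al (S j) = al j * ((c + INR j) / (c + del + INR j)).
Proof. unfold al. simpl poch. assert (0 < poch (c + del) j) by (apply poch_pos; lra). pose proof (pos_INR j).
  field. split; lra. Qed.
Lemma be_S j : be (S j) = be j * ((d + INR j) / (d + del + INR j)).
Proof. unfold be. simpl poch. assert (0 < poch (d + del) j) by (apply poch_pos; lra). pose proof (pos_INR j).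
  field. split; lra. Qed.

Lemma al_le_be j : al j <= be j /\ ((1 <= j)%nat -> al j < be j).
Proof. induction j.
  - unfold al, be; simpl. split; [lra | lia].
  - rewrite al_S, be_S. pose proof (al_pos j). pose proof (pos_INR j).
    assert (Hr : (c + INR j) / (c + del + INR j) < (d + INR j) / (d + del + INR j)).
    { apply Rmult_lt_reg_r with ((c + del + INR j) * (d + del + INR j)). pos.
      replace ((c + INR j) / (c + del + INR j) * ((c + del + INR j) * (d + del + INR j))) with ((c + INR j) * (d + del + INR j)) by (field; lra).
      replace ((d + INR j) / (d + del + INR j) * ((c + del + INR j) * (d + del + INR j))) with ((d + INR j) * (c + del + INR j)) by (field; lra).
      nra. }
    assert (0 < (c + INR j) / (c + del + INR j)) by pos.
    destruct IHj as [IH _]. split; intros; nra.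
Qed.

Lemma al_mono k m : (k <= m)%nat -> al m <= al k.
Proof. intros H. induction H. lra. rewrite al_S. pose proof (al_pos m). pose proof (pos_INR m).
  assert ((c + INR m) / (c + del + INR m) <= 1).
  { apply Rmult_le_reg_r with (c + del + INR m). lra. unfold Rdiv. rewrite Rmult_assoc, Rinv_l by lra. lra. }
  assert (0 <= (c + INR m) / (c + del + INR m)) by (apply Rlt_le; pos). nra. Qed.

Lemma be_mono k m : (k <= m)%nat -> be m <= be k.
Proof. intros H. induction H. lra. rewrite be_S. pose proof (be_pos m). pose proof (pos_INR m).
  assert ((d + INR m) / (d + del + INR m) <= 1).
  { apply Rmult_le_reg_r with (d + del + INR m). lra. unfold Rdiv. rewrite Rmult_assoc, Rinv_l by lra. lra. }
  assert (0 <= (d + INR m) / (d + del + INR m)) by (apply Rlt_le; pos). nra. Qed.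

Lemma poch_cross k m : (k <= m)%nat -> poch c m * poch d k <= poch d m * poch c k.
Proof. intros H. induction H. lra. simpl poch. pose proof (pos_INR m).
  assert (0 < poch c m) by (apply poch_pos; lra). assert (0 < poch d m) by (apply poch_pos; lra).
  assert (0 < poch d k) by (apply poch_pos; lra). assert (0 < poch c k) by (apply poch_pos; lra).
  apply Rle_trans with ((c + INR m) * (poch d m * poch c k)).
  replace (poch c m * (c + INR m) * poch d k) with ((c + INR m) * (poch c m * poch d k)) by ring.
  apply Rmult_le_compat_l; lra.
  replace (poch d m * (d + INR m) * poch c k) with ((d + INR m) * (poch d m * poch c k)) by ring.
  apply Rmult_le_compat_r. apply Rlt_le, Rmult_lt_0_compat; auto. lra. Qed.

Lemma pair_le k m : (k <= m)%nat -> (1 <= k + m)%nat ->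
  / (poch (c + del) k * poch d m) + / (poch (c + del) m * poch d k) <
  / (poch (d + del) k * poch c m) + / (poch (d + del) m * poch c k).
Proof. intros Hkm H1.
  assert (Hm : (1 <= m)%nat) by lia.
  set (P := / (poch c k * poch d m)). set (Q := / (poch c m * poch d k)).
  assert (Pp : 0 < P) by (unfold P; pos; apply poch_pos; lra).
  assert (Qp : 0 < Q) by (unfold Q; pos; apply poch_pos; lra).
  assert (PQ : P <= Q).
  { unfold P, Q. apply Rinv_le_contravar. apply Rmult_lt_0_compat; apply poch_pos; lra.
    pose proof (poch_cross k m Hkm). lra. }
  assert (E1 : / (poch (c + del) k * poch d m) = al k * P).
  { unfold al, P. assert (0 < poch c k) by (apply poch_pos; lra). assert (0 < poch (c+del) k) by (apply poch_pos; lra).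
    assert (0 < poch d m) by (apply poch_pos; lra). field. repeat split; lra. }
  assert (E2 : / (poch (c + del) m * poch d k) = al m * Q).
  { unfold al, Q. assert (0 < poch c m) by (apply poch_pos; lra). assert (0 < poch (c+del) m) by (apply poch_pos; lra).
    assert (0 < poch d k) by (apply poch_pos; lra). field. repeat split; lra. }
  assert (E3 : / (poch (d + del) k * poch c m) = be k * Q).
  { unfold be, Q. assert (0 < poch c m) by (apply poch_pos; lra). assert (0 < poch (d+del) k) by (apply poch_pos; lra).
    assert (0 < poch d k) by (apply poch_pos; lra). field. repeat split; lra. }
  assert (E4 : / (poch (d + del) m * poch c k) = be m * P).
  { unfold be, P. assert (0 < poch c k) by (apply poch_pos; lra). assert (0 < poch (d+del) m) by (apply poch_pos; lra).
    assert (0 < poch d m) by (apply poch_pos; lra). field. repeat split; lra. }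
  rewrite E1, E2, E3, E4.
  destruct (al_le_be k) as [Hk _]. destruct (al_le_be m) as [_ Hm'].
  specialize (Hm' Hm). pose proof (al_mono k m Hkm). pose proof (be_mono k m Hkm).
  destruct (Rle_lt_dec (be m) (al k)) as [Hc1|Hc1]; nra.
Qed.

Lemma pair_ineq k m : (1 <= k + m)%nat ->
  / (poch (c + del) k * poch d m) + / (poch (c + del) m * poch d k) <
  / (poch (d + del) k * poch c m) + / (poch (d + del) m * poch c k).
Proof. intros H. destruct (Nat.le_gt_cases k m). apply pair_le; auto.
  pose proof (pair_le m k ltac:(lia) ltac:(lia)). lra. Qed.
End PA.

Lemma is_series_Rminus (a0 b0 : nat -> R) la lb : is_series a0 la -> is_series b0 lb -> is_series (fun n => a0 n - b0 n) (la - lb).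
Proof. intros H1 H2. exact (is_series_minus _ _ _ _ H1 H2). Qed.

Lemma hyp2F1_in a b c x : Rabs x < 1 -> hyp2F1 a b c x = hypseries a b c x.
Proof. intros H. unfold hyp2F1. destruct (Rlt_dec (Rabs x) 1); [reflexivity|contradiction]. Qed.

Lemma PS_mult_series p q x : Rbar_le 1 (CV_radius p) -> Rbar_le 1 (CV_radius q) -> Rabs x < 1 ->
  is_series (fun n => PS_mult p q n * x ^ n) (PSeries p x * PSeries q x).
Proof. intros Hp Hq Hx. rewrite <- PSeries_mult by (apply lt_radius; auto).
  apply is_pseries_R. apply PSeries_correct. apply ex_pseries_mult; apply lt_radius; auto. Qed.

Lemma part_a a b c d delta :
     d > c -> c > 0 -> a > 0 -> b > 0 -> delta > 0 ->
     exists e : nat -> R,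
       e O = 0 /\ (forall n : nat, (1 <= n)%nat -> e n < 0) /\
       (forall x : R, Rabs x < 1 ->
          is_series (fun n => e n * x ^ n)
            (hyp2F1 a b (c + delta) x * hyp2F1 a b d x
             - hyp2F1 a b (d + delta) x * hyp2F1 a b c x)).
Proof. intros Hdc Hc Ha Hb Hdel.
  set (p := hypcoef a b (c + delta)). set (q := hypcoef a b d). set (r := hypcoef a b (d + delta)). set (s := hypcoef a b c).
  exists (fun n => PS_mult p q n - PS_mult r s n). split; [|split].
  - unfold PS_mult, p, q, r, s, hypcoef. simpl. field.
  - intros n Hn. set (A := fun j => poch a j * poch b j / INR (Factorial.fact j)).
    set (T := fun k m => A k * A m * (/ (poch (c + delta) k * poch d m) - / (poch (d + delta) k * poch c m))).
    assert (E : PS_mult p q n - PS_mult r s n = sum_f_R0 (fun k => T k (n - k)%nat) n).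
    { unfold PS_mult. rewrite <- minus_sum. apply sum_eq. intros k Hk. unfold T, A, p, q, r, s, hypcoef.
      assert (0 < poch (c + delta) k) by (apply poch_pos; lra). assert (0 < poch (d + delta) k) by (apply poch_pos; lra).
      assert (0 < poch c (n - k)) by (apply poch_pos; lra). assert (0 < poch d (n - k)) by (apply poch_pos; lra).
      pose proof (fact_pos k). pose proof (fact_pos (n - k)). field. repeat split; lra. }
    rewrite E.
    assert (E2 : sum_f_R0 (fun k => T k (n - k)%nat) n = / 2 * sum_f_R0 (fun k => T k (n - k)%nat + T (n - k)%nat k) n).
    { rewrite plus_sum.
      assert (HS : sum_f_R0 (fun k => T (n - k)%nat k) n = sum_f_R0 (fun k => T k (n - k)%nat) n).
      { rewrite (sum_rev (fun k => T k (n - k)%nat) n). apply sum_eq. intros i Hi. f_equal. lia. }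
      rewrite HS. field. }
    rewrite E2. assert (sum_f_R0 (fun k => T k (n - k)%nat + T (n - k)%nat k) n < 0); [|lra].
    apply sum_neg. intros k Hk. unfold T.
    assert (0 < A k) by (unfold A; pos; apply poch_pos; lra). assert (0 < A (n - k)%nat) by (unfold A; pos; apply poch_pos; lra).
    pose proof (pair_ineq c d delta Hc Hdc Hdel k (n - k) ltac:(lia)).
    replace (A k * A (n - k)%nat * (/ (poch (c + delta) k * poch d (n - k)) - / (poch (d + delta) k * poch c (n - k))) +
      A (n - k)%nat * A k * (/ (poch (c + delta) (n - k) * poch d k) - / (poch (d + delta) (n - k) * poch c k)))
      with (A k * A (n - k)%nat * ((/ (poch (c + delta) k * poch d (n - k)) + / (poch (c + delta) (n - k) * poch d k)) -
         (/ (poch (d + delta) k * poch c (n - k)) + / (poch (d + delta) (n - k) * poch c k)))) by ring.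
    assert (0 < A k * A (n - k)%nat) by pos. nra.
  - intros x Hx. rewrite !hyp2F1_in by auto. rewrite !hyp_PSeries.
    eapply is_series_ext; [|apply is_series_Rminus; apply PS_mult_series; auto; apply hyp_radius; lra].
    intros n. simpl. apply Req_conv. unfold p, q, r, s. ring.
Qed.

Theorem theorem8 :
  (* (a) *)
  (forall a b c d delta : R,
     d > c -> c > 0 -> a > 0 -> b > 0 -> delta > 0 ->
     exists e : nat -> R,
       e O = 0 /\ (forall n : nat, (1 <= n)%nat -> e n < 0) /\
       (forall x : R, Rabs x < 1 ->
          is_series (fun n => e n * x ^ n)
            (hyp2F1 a b (c + delta) x * hyp2F1 a b d x
             - hyp2F1 a b (d + delta) x * hyp2F1 a b c x))) /\
  (* (b) *)
  (forall a b x : R,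
     ((a > 0 /\ b > 0 /\ 0 < x < 1) \/
      (a < 0 /\ x < 0 /\ b > 0) \/
      (b < 0 /\ x < 0 /\ a > 0)) ->
     log_convex_on (fun c => 0 < c) (fun c => hyp2F1 a b c x)) /\
  (* (c) *)
  (forall a b c x : R,
     ((a > 0 /\ b > c /\ c > 0 /\ 0 < x < 1) \/
      (a < 0 /\ b < c /\ c > 0 /\ 0 < x < 1) \/
      (a > 0 /\ b < c /\ c > 0 /\ x < 0)) ->
     log_convex_on (fun mu => 0 <= mu) (fun mu => hyp2F1 a (b + mu) (c + mu) x)) /\
  (* (d) *)
  (forall a b c x : R,
     ((a < c /\ b >= c /\ c > 0 /\ x < 0) \/
      (a < c /\ b < c /\ c > 0 /\ 0 < x < 1)) ->
     log_convex_on (fun mu => 0 <= mu) (fun mu => hyp2F1 (a + mu) (b + mu) (c + mu) x)).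

Proof.
  split; [|split; [|split]].
  - intros a b c d delta H1 H2 H3 H4 H5. apply part_a; auto.
  - intros a b x H. apply part_b; auto.
  - intros a b c x H. apply part_c; auto.
  - intros a b c x H. apply part_d; auto.
Qed.
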